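(* Let $s\ge 2$ be an even constant and $\epsilon$ a constant with $0<\epsilon<1/(2s-1)$. For every instance of the class $G^*_\epsilon$ (with $n$ even), the expected number of fitness function evaluations the $(1+1)$~EA needs to find an optimal solution is at least $n^{\Omega(n)}$.
   Context: Partition problem: an instance consists of $n$ jobs with positive processing times $p_1,\dots,p_n$. A solution is $x\in\{0,1\}^n$ (job $i$ on machine $M_1$ if $x_i=0$, on $M_2$ if $x_i=1$), with makespan $f(x)=\max\{\sum_i p_ix_i,\sum_i p_i(1-x_i)\}$ to be minimised; an optimal solution minimises $f$. The class $G^*_\epsilon$: instances with an even number $n$ of jobs, an even number $s=\Theta(1)$ of large jobs, and processing times $p_i=\frac{1}{2s-1}-\frac{\epsilon}{2s}$ for $i\le s$ and $p_i=\frac{s-1}{n-s}\left(\frac{1}{2s-1}+\frac{\epsilon}{2(s-1)}\right)$ for $s<i\le n$, where $0<\epsilon<1/(2s-1)$ is an arbitrarily small constant. The $(1+1)$~EA (minimisation): initialise $x\in\{0,1\}^n$ uniformly at random; in each iteration create $y$ by flipping each bit of $x$ independently with probability $1/n$, and set $x:=y$ if $f(y)\le f(x)$. Asymptotics are as $n\to\infty$. *)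

(* Defs.v *)
From HB Require Import structures.
From mathcomp Require Import all_boot all_order all_algebra.
From mathcomp Require Import all_classical all_reals all_analysis.
Set Implicit Arguments. Unset Strict Implicit. Unset Printing Implicit Defensive.
Import Order.TTheory GRing.Theory Num.Theory.
Local Open Scope ring_scope.

Section PartitionEA.
Variable R : realType.

(* A solution: x : {ffun 'I_n -> bool}; x i = false means job i on M1,
   x i = true means job i on M2.  Jobs are 0-indexed: job i is the paper's job i+1. *)
Definition bits (n : nat) := {ffun 'I_n -> bool}.

Definition makespan n (p : 'I_n -> R) (x : bits n) : R :=
  Num.max (\sum_(i < n) p i * (x i)%:R) (\sum_(i < n) p i * (1 - (x i)%:R)).

Definition optimal n (p : 'I_n -> R) (x : bits n) : bool :=
  [forall y : bits n, makespan p x <= makespan p y].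

(* The class G*_eps: processing times (paper's i <= s is our i < s). *)
Definition Gstar_p (s : nat) (eps : R) (n : nat) (i : 'I_n) : R :=
  if (i < s)%N then 1 / (2 * s%:R - 1) - eps / (2 * s%:R)
  else (s%:R - 1) / (n%:R - s%:R) * (1 / (2 * s%:R - 1) + eps / (2 * (s%:R - 1))).

Definition hamming n (x y : bits n) : nat := #|[set i | x i != y i]|.

Definition mut n (x y : bits n) : R :=
  (n%:R^-1) ^+ hamming x y * (1 - n%:R^-1) ^+ (n - hamming x y).

Definition ea_step n (p : 'I_n -> R) (x y : bits n) : R :=
  if y == x then
    mut x x + \sum_(z : bits n | makespan p x < makespan p z) mut x z
  else if makespan p y <= makespan p x then mut x y else 0.

(* Sub-probability distribution of the current search point at time t
   restricted to runs in which no optimal solution has been seen at times 0..t: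
   surv p t x = Pr[x_t = x and T > t], where T = first t with x_t optimal. *)
Fixpoint surv n (p : 'I_n -> R) (t : nat) : bits n -> R :=
  match t with
  | 0 => fun x => if optimal p x then 0 else (2%:R ^+ n)^-1
  | t'.+1 => fun y => if optimal p y then 0
                     else \sum_(x : bits n) surv p t' x * ea_step p x y
  end.

Definition tail_prob n (p : 'I_n -> R) (t : nat) : R := \sum_(x : bits n) surv p t x.

(* Expected number of fitness evaluations: one for the initial point plus one per
   iteration until an optimum is found, i.e. 1 + E[T] = 1 + sum_{t>=0} Pr[T > t]
   (an extended real, possibly +oo). *)
Definition expected_evals n (p : 'I_n -> R) : \bar R :=
  (1%:E + \sum_(0 <= t <oo) (tail_prob p t)%:E)%E.

End PartitionEA.

(* Main.v *)
Require Import Defs.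
From HB Require Import structures.
From mathcomp Require Import all_boot all_order all_algebra.
From mathcomp Require Import all_classical all_reals all_analysis.
From mathcomp.algebra_tactics Require Import ring lra.
From mathcomp Require Import zify.
Import Order.TTheory GRing.Theory Num.Theory.
Local Open Scope ring_scope.
Set Implicit Arguments. Unset Strict Implicit.

Section Prob.
Variable R : realType.

Lemma hamming_sum n (x z : bits n) :
  hamming x z = (\sum_(i < n) (x i != z i))%N.
Proof.
rewrite /hamming -sum1_card big_mkcond /=; apply: eq_bigr => i _.
by rewrite inE; case: (x i != z i).
Qed.

Lemma mut_prod n (x z : bits n) (w : R) :
  mut R x z * w ^+ hamming x z =
  \prod_(i < n) (if x i == z i then 1 - n%:R^-1 else w * n%:R^-1).
Proof.
rewrite (bigID (fun i => x i == z i)) /=.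
rewrite (eq_bigr (fun _ => 1 - n%:R^-1)); last by move=> i ->.
rewrite [X in _ = _ * X](eq_bigr (fun _ => w * n%:R^-1)); last by move=> i /negbTE ->.
rewrite !prodr_const /mut /hamming.
have hc : #|[pred i | x i == z i]| = (n - #|[set i | x i != z i]|)%N.
  have := cardC [pred i | x i == z i]; rewrite card_ord => H.
  have -> : #|[set i | x i != z i]| = #|[predC [pred i | x i == z i]]|.
    by apply: eq_card => i; rewrite !inE.
  apply/eqP; rewrite -(eqn_add2r #|[predC [pred i | x i == z i]]|) subnK.
    by rewrite H.
  by apply: leq_trans (max_card _) _; rewrite card_ord.
have hc2 : #|[pred i | x i != z i]| = #|[set i | x i != z i]|.
  by apply: eq_card => i; rewrite !inE.
rewrite hc.
rewrite [X in _ = _ * X](_ : _ = (w * n%:R^-1) ^+ #|[set i | x i != z i]|); last first.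
  by congr (_ ^+ _); apply: eq_card => i; rewrite !inE.
rewrite exprMn; ring.
Qed.

Lemma sum_mut_w n (x : bits n) (w : R) :
  \sum_(z : bits n) mut R x z * w ^+ hamming x z = (1 - n%:R^-1 + w * n%:R^-1) ^+ n.
Proof.
rewrite (eq_bigr _ (fun z _ => mut_prod x z w)).
pose F := fun (i : 'I_n) (b : bool) => if x i == b then 1 - n%:R^-1 else w * n%:R^-1 : R.
have := (bigA_distr_bigA F); rewrite /F => <-.
rewrite (eq_bigr (fun _ => 1 - n%:R^-1 + w * n%:R^-1)).
  by rewrite prodr_const card_ord.
move=> i _; rewrite big_bool /=; case: (x i) => /=; ring.
Qed.


Lemma invn_le1 n : n%:R^-1 <= 1 :> R.
Proof. case: n => [|n]; first by rewrite invr0. by rewrite invf_le1 // ler1n. Qed.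

Lemma mut_ge0 n (x z : bits n) : 0 <= mut R x z.
Proof.
rewrite /mut; apply: mulr_ge0; apply: exprn_ge0; first by rewrite invr_ge0.
by rewrite subr_ge0 invn_le1.
Qed.

Lemma ea_step_ge0 n (p : 'I_n -> R) x y : 0 <= ea_step p x y.
Proof.
rewrite /ea_step; case: ifP => _.
  by apply: addr_ge0; [apply: mut_ge0 | apply: sumr_ge0 => z _; apply: mut_ge0].
by case: ifP => _ //; apply: mut_ge0.
Qed.

Lemma surv_ge0 n (p : 'I_n -> R) t y : 0 <= surv p t y.
Proof.
elim: t y => [|t IH] y /=; case: ifP => _ //.
by apply: sumr_ge0 => z _; apply: mulr_ge0 => //; apply: ea_step_ge0.
Qed.

Lemma sum_mut n (x : bits n) : \sum_(z : bits n) mut R x z = 1.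
Proof.
have := sum_mut_w x 1; rewrite mul1r subrK expr1n => <-.
by apply: eq_bigr => z _; rewrite expr1n mulr1.
Qed.

Definition leave n (p : 'I_n -> R) (x : bits n) :=
  \sum_(z : bits n | (z != x) && (makespan p z <= makespan p x)) mut R x z.

Lemma ea_step_self n (p : 'I_n -> R) x : ea_step p x x = 1 - leave p x.
Proof.
have hs := sum_mut x.
rewrite (bigD1 x) //= (bigID (fun z => makespan p x < makespan p z)) /= in hs.
rewrite /ea_step eqxx /leave -hs.
have -> : \sum_(z | makespan p x < makespan p z) mut R x z =
          \sum_(z | (z != x) && (makespan p x < makespan p z)) mut R x z.
  apply: eq_bigl => z; case: eqP => [->|] /=; first by rewrite ltxx.
  by [].
have -> : \sum_(i | (i != x) && ~~ (makespan p x < makespan p i)) mut R x i =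
          \sum_(z | (z != x) && (makespan p z <= makespan p x)) mut R x z.
  by apply: eq_bigl => z; rewrite -leNgt.
ring.
Qed.

Lemma leave_ge0 n (p : 'I_n -> R) x : 0 <= leave p x.
Proof. by apply: sumr_ge0 => z _; apply: mut_ge0. Qed.

Lemma leave_le1 n (p : 'I_n -> R) x : leave p x <= 1.
Proof. by have := ea_step_ge0 p x x; rewrite ea_step_self subr_ge0. Qed.

Lemma surv_lb n (p : 'I_n -> R) x t : ~~ optimal p x ->
  (2%:R ^+ n)^-1 * (1 - leave p x) ^+ t <= surv p t x.
Proof.
move=> /negbTE hx; elim: t => [|t IH] /=; rewrite hx; first by rewrite expr0 mulr1.
rewrite (bigD1 x) //= -ea_step_self exprSr mulrA.
rewrite -[X in X <= _]addr0; apply: lerD; last by apply: sumr_ge0 => z _; apply: mulr_ge0;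
  [apply: surv_ge0 | apply: ea_step_ge0].
apply: ler_wpM2r; [exact: ea_step_ge0 | by rewrite ea_step_self].
Qed.

Lemma tail_lb n (p : 'I_n -> R) x t : surv p t x <= tail_prob p t.
Proof.
rewrite /tail_prob (bigD1 x) //= -[X in X <= _]addr0; apply: lerD => //.
by apply: sumr_ge0 => z _; apply: surv_ge0.
Qed.

Lemma bernoulli (q : R) t : 0 <= q <= 1 -> 1 - t%:R * q <= (1 - q) ^+ t.
Proof.
move=> /andP[q0 q1]; elim: t => [|t IH]; first by rewrite mul0r subr0 expr0.
rewrite exprSr; apply: le_trans (ler_wpM2r _ IH); last by rewrite subr_ge0.
have t0 : (0:R) <= t%:R by []. rewrite -natr1; nra.
Qed.

Lemma expected_lb n (p : 'I_n -> R) x (M : nat) : ~~ optimal p x ->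
  ((M%:R * (2%:R ^+ n)^-1 * (1 - M%:R * leave p x))%:E <= expected_evals p)%E.
Proof.
move=> hx; rewrite /expected_evals.
apply: (@le_trans _ _ (\sum_(0 <= t < M) (tail_prob p t)%:E)%E); last first.
  apply: lee_paddl; first by rewrite lee_fin.
  by apply: nneseries_lim_ge => k _ _; rewrite lee_fin /tail_prob; apply: sumr_ge0 => z _;
    apply: surv_ge0.
rewrite sumEFin lee_fin.
have h : forall t, (t < M)%N -> (2%:R ^+ n)^-1 * (1 - M%:R * leave p x) <= tail_prob p t.
  move=> t tM; apply: le_trans (tail_lb p x t); apply: le_trans (surv_lb t hx).
  apply: ler_wpM2l; first by rewrite invr_ge0 exprn_ge0.
  apply: le_trans (bernoulli t _); last by rewrite leave_ge0 leave_le1.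
  rewrite lerD2l lerN2; apply: ler_wpM2r; first exact: leave_ge0.
  by rewrite ler_nat ltnW.
apply: le_trans (_ : \sum_(0 <= t < M) (2%:R ^+ n)^-1 * (1 - M%:R * leave p x) <= _).
  by rewrite sumr_const_nat subn0 mulr_natl mulrnAl -mulr_natl mulrA.
rewrite big_nat_cond [X in _ <= X]big_nat_cond; apply: ler_sum => t /andP[/andP[_ tM] _].
exact: h.
Qed.


Lemma leave_ub n (p : 'I_n -> R) x (N0 : R) : (0 < n)%N ->
  (forall z, z != x -> makespan p z <= makespan p x -> N0 <= n%:R ^+ hamming x z) ->
  leave p x * N0 <= 2%:R ^+ n.
Proof.
move=> n0 H.
have n0R : (0:R) < n%:R by rewrite ltr0n.
apply: (@le_trans _ _ (\sum_(z : bits n) mut R x z * n%:R ^+ hamming x z)).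
  rewrite /leave mulr_suml [X in _ <= X](bigID (fun z => (z != x) && (makespan p z <= makespan p x))) /=.
  rewrite -[X in X <= _]addr0; apply: lerD.
    apply: ler_sum => z /andP[zx hz]; apply: ler_wpM2l; first exact: mut_ge0.
    exact: H.
  by apply: sumr_ge0 => z _; apply: mulr_ge0; [apply: mut_ge0 | apply: exprn_ge0].
rewrite sum_mut_w mulfV ?gt_eqF //.
apply: lerXn2r; rewrite ?nnegrE //.
- have := invn_le1 n; lra.
- have : (0:R) <= n%:R^-1 by rewrite invr_ge0. lra.
Qed.

End Prob.


Section Inst.
Variable R : realType.

Lemma count_lt_nat n m : (\sum_(i < n) ((i < m)%N : nat))%N = minn n m.
Proof.
elim: n => [|n IH]; first by rewrite big_ord0 min0n.
rewrite big_ord_recr /= IH.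
case: (ltnP n m) => h /=; [rewrite addn1 | rewrite addn0]; lia.
Qed.

Lemma count_lt n m : \sum_(i < n) ((i < m)%N%:R : R) = (minn n m)%:R.
Proof. by rewrite -count_lt_nat natr_sum. Qed.

Definition aG s (eps : R) := 1 / (2 * s%:R - 1) - eps / (2 * s%:R).
Definition bG s (eps : R) n := (s%:R - 1) / (n%:R - s%:R) * (1 / (2 * s%:R - 1) + eps / (2 * (s%:R - 1))).
Definition betaG s (eps : R) := (s%:R - 1) * (1 / (2 * s%:R - 1) + eps / (2 * (s%:R - 1))).

Lemma pE s (eps : R) n (i : 'I_n) : Gstar_p s eps i = if (i < s)%N then aG s eps else bG s eps n.
Proof. by []. Qed.

Definition Acnt n s (z : bits n) : nat := (\sum_(i < n) ((i < s)%N && z i))%N.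
Definition Bcnt n s (z : bits n) : nat := (\sum_(i < n) (~~ (i < s)%N && z i))%N.

Lemma load2 s (eps : R) n (z : bits n) :
  \sum_(i < n) Gstar_p s eps i * (z i)%:R = aG s eps * (Acnt s z)%:R + bG s eps n * (Bcnt s z)%:R.
Proof.
rewrite /Acnt /Bcnt !natr_sum !mulr_sumr -big_split /=; apply: eq_bigr => i _.
rewrite pE; case: (i < s)%N; case: (z i) => /=; ring.
Qed.

Lemma total s (eps : R) n : (s <= n)%N ->
  \sum_(i < n) Gstar_p s eps i = aG s eps * s%:R + bG s eps n * (n%:R - s%:R).
Proof.
move=> sn.
have e : forall i : 'I_n, Gstar_p s eps i = aG s eps * ((i < s)%N%:R) + bG s eps n * (1 - (i < s)%N%:R).
  by move=> i; rewrite pE; case: (i < s)%N => /=; ring.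
rewrite (eq_bigr _ (fun i _ => e i)) big_split /= -!mulr_sumr sumrB count_lt.
by rewrite (minn_idPr sn) sumr_const card_ord.
Qed.

Lemma makespanE s (eps : R) n (z : bits n) :
  makespan (Gstar_p s eps (n:=n)) z =
  Num.max (\sum_(i < n) Gstar_p s eps i * (z i)%:R)
          (\sum_(i < n) Gstar_p s eps i - \sum_(i < n) Gstar_p s eps i * (z i)%:R).
Proof.
rewrite /makespan; congr Num.max; rewrite -sumrB; apply: eq_bigr => i _; ring.
Qed.


Section Consts.
Variables (s : nat) (eps : R).
Hypotheses (hs : (2 <= s)%N) (he0 : 0 < eps) (he1 : eps < 1 / (2 * s%:R - 1)).

Local Notation S := (s%:R : R).
Lemma S2 : 2 <= S. Proof. by rewrite ler_nat. Qed.
Let nz1 : 2 * S - 1 != 0. Proof. have := S2 => h; apply/eqP => e; lra. Qed.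
Let nz2 : S != 0. Proof. have := S2 => h; apply/eqP => e; lra. Qed.
Let nz3 : S - 1 != 0. Proof. have := S2 => h; apply/eqP => e; lra. Qed.
Let pos1 : 0 < 2 * S - 1. Proof. have := S2; lra. Qed.
Lemma epsS : eps * (2 * S - 1) < 1.
Proof. by move: he1; rewrite ltr_pdivlMr. Qed.

Lemma F1 : aG s eps * S = 1 - betaG s eps.
Proof. rewrite /aG /betaG; field. by rewrite nz1 nz2 nz3. Qed.

Lemma F2 : 0 < aG s eps.
Proof.
have -> : aG s eps = (2 * S - eps * (2 * S - 1)) / (2 * S * (2 * S - 1)).
  rewrite /aG; field; by rewrite nz1 nz2.
have := epsS; have := S2 => h1 h2.
apply: divr_gt0; first lra.
apply: mulr_gt0 => //; lra.
Qed.

Lemma betaE : betaG s eps = (S - 1) / (2 * S - 1) + eps / 2.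
Proof. rewrite /betaG; field; by rewrite nz1 nz3. Qed.

Lemma F3 : betaG s eps < 1 / 2.
Proof.
have -> : betaG s eps = 1 / 2 - (1 - eps * (2 * S - 1)) / (2 * (2 * S - 1)).
  rewrite betaE; field; by rewrite nz1.
have := epsS => h; have : 0 < (1 - eps * (2 * S - 1)) / (2 * (2 * S - 1)).
  apply: divr_gt0; first lra. by apply: mulr_gt0.
lra.
Qed.

Lemma F4 : 0 < betaG s eps.
Proof.
rewrite betaE; have : 0 < (S - 1) / (2 * S - 1).
  apply: divr_gt0 => //; have := S2; lra.
have : 0 < eps / 2 by apply: divr_gt0.
lra.
Qed.

Definition gammaG := betaG s eps - (S - 1) * aG s eps.

Lemma F5 : 0 < gammaG.
Proof.
have -> : gammaG = eps / 2 + (S - 1) * eps / (2 * S).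
  rewrite /gammaG /betaG /aG; field; by rewrite nz1 nz2 nz3.
have : 0 < (S - 1) * eps / (2 * S).
  have := S2 => h. apply: divr_gt0; last lra. apply: mulr_gt0 => //; lra.
have : 0 < eps / 2 by apply: divr_gt0.
lra.
Qed.

Lemma F6 n : (s < n)%N -> bG s eps n * (n%:R - S) = betaG s eps.
Proof.
move=> sn; have nz : (n%:R - S) != 0.
  by rewrite subr_eq0 eqr_nat neq_ltn sn orbT.
rewrite /bG /betaG; field; by rewrite nz1 nz3 nz.
Qed.

Lemma F7 n : (s < n)%N -> 0 < bG s eps n.
Proof.
move=> sn; have h : 0 < n%:R - S by rewrite subr_gt0 ltr_nat.
have := F6 sn; have := F4 => h1 h2.
have : bG s eps n = betaG s eps / (n%:R - S).
  by rewrite -h2 mulfK // gt_eqF.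
move=> ->; exact: divr_gt0.
Qed.


Definition xstar n : bits n := [ffun i : 'I_n => ~~ (i < s)%N].

Lemma sum_ge n : (s <= n)%N -> \sum_(i < n) (1 - ((i < s)%N)%:R : R) = n%:R - S.
Proof. by move=> sn; rewrite sumrB count_lt (minn_idPr sn) sumr_const card_ord. Qed.

Lemma ham_xstar n (z : bits n) : (s <= n)%N ->
  (hamming (xstar n) z)%:R = (Acnt s z)%:R + (n%:R - S) - (Bcnt s z)%:R :> R.
Proof.
move=> sn; rewrite hamming_sum /Acnt /Bcnt !natr_sum -sum_ge // -addrA -sumrB -big_split /=.
apply: eq_bigr => i _; rewrite ffunE; case: (i < s)%N; case: (z i) => /=; ring.
Qed.

Lemma Bcnt_le n (z : bits n) : (s <= n)%N -> (Bcnt s z)%:R <= n%:R - S :> R.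
Proof.
move=> sn; rewrite /Bcnt natr_sum -sum_ge //; apply: ler_sum => i _.
by case: (i < s)%N; case: (z i); rewrite /= ?mulr0n ?mulr1n; lra.
Qed.

Lemma Acnt_xstar n : Acnt s (xstar n) = 0%N.
Proof. by rewrite /Acnt big1 // => i _; rewrite ffunE; case: (i < s)%N. Qed.

Lemma Bcnt_xstar n : (s <= n)%N -> (Bcnt s (xstar n))%:R = n%:R - S :> R.
Proof.
move=> sn; rewrite /Bcnt natr_sum -sum_ge //; apply: eq_bigr => i _.
by rewrite ffunE; case: (i < s)%N; rewrite /= ?mulr0n ?mulr1n ?subr0 ?subrr.
Qed.

Lemma ham0 n (x z : bits n) : hamming x z = 0%N -> z = x.
Proof.
rewrite /hamming => /eqP; rewrite cards_eq0 => /eqP h.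
apply/ffunP => i; apply/eqP; rewrite eq_sym; apply/negPn/negP => hi.
have : i \in [set i | x i != z i] by rewrite inE.
by rewrite h inE.
Qed.

Lemma total1 n : (s < n)%N -> \sum_(i < n) Gstar_p s eps i = 1.
Proof.
move=> sn; rewrite total ?(ltnW sn) // F6 // F1; ring.
Qed.

Lemma makespan_xstar n : (s < n)%N ->
  makespan (Gstar_p s eps (n:=n)) (xstar n) = 1 - betaG s eps.
Proof.
move=> sn; rewrite makespanE load2 total1 // Acnt_xstar Bcnt_xstar ?(ltnW sn) //.
rewrite mulr0 add0r F6 //.
have := F3; move=> h; rewrite max_r //; lra.
Qed.

Lemma trap n (z : bits n) : (s < n)%N -> z != xstar n ->
  makespan (Gstar_p s eps (n:=n)) z <= makespan (Gstar_p s eps (n:=n)) (xstar n) ->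
  gammaG * (n%:R - S) <= betaG s eps * (hamming (xstar n) z)%:R.
Proof.
move=> sn zx; rewrite makespan_xstar // makespanE total1 // load2 ge_max => /andP[h1 h2].
rewrite ham_xstar ?(ltnW sn) //.
have hB := Bcnt_le z (ltnW sn).
have hb := F7 sn; have ha := F2; have hbe := F6 sn; have hbeta := F4; have hF1 := F1.
have hns : 0 < n%:R - S by rewrite subr_gt0 ltr_nat.
have [A0|A1] := eqVneq (Acnt s z) 0%N.
  exfalso; move: zx; apply/negP; rewrite negbK; apply/eqP; apply: ham0.
  apply/eqP; rewrite -(eqr_nat R) ham_xstar ?(ltnW sn) // A0.
  move: h2; rewrite A0 mulr0 add0r => h2.
  have hBB : n%:R - S <= (Bcnt s z)%:R.
    rewrite -(ler_pM2l hb) hbe; lra.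
  apply/eqP; lra.
have hA : 1 <= (Acnt s z)%:R :> R by rewrite ler1n lt0n.
have k1 : gammaG <= bG s eps n * (n%:R - S - (Bcnt s z)%:R).
  rewrite /gammaG; nra.
have k2 : gammaG * (n%:R - S) <= bG s eps n * (n%:R - S - (Bcnt s z)%:R) * (n%:R - S).
  by apply: ler_wpM2r => //; apply: ltW.
have k3 : bG s eps n * (n%:R - S - (Bcnt s z)%:R) * (n%:R - S) = betaG s eps * (n%:R - S - (Bcnt s z)%:R).
  by rewrite -hbe; ring.
apply: le_trans k2 _; rewrite k3; apply: ler_wpM2l; first exact: ltW.
have : 0 <= (Acnt s z)%:R :> R by rewrite ler0n.
lra.
Qed.


Lemma not_opt n : (s < n)%N -> ~~ odd s -> ~~ odd n ->
  ~~ optimal (Gstar_p s eps (n:=n)) (xstar n).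
Proof.
move=> sn es en.
set k := s./2; set h := (n - s)./2.
have hk : s = (k + k)%N by rewrite addnn /k -[LHS](odd_double_half s) (negbTE es).
have hh : (n - s)%N = (h + h)%N.
  rewrite addnn /h -[LHS](odd_double_half (n - s)) oddB ?(ltnW sn) //.
  by rewrite (negbTE es) (negbTE en).
pose y : bits n := [ffun i : 'I_n => (i < k)%N || ((s <= i)%N && (i < s + h)%N)].
have ey : forall i : 'I_n, Gstar_p s eps i * (y i)%:R =
    aG s eps * ((i < k)%N)%:R + bG s eps n * (((i < s + h)%N)%:R - ((i < s)%N)%:R).
  move=> i; rewrite ffunE pE.
  case: (ltnP i k) => h1; case: (ltnP i s) => h2; case: (ltnP i (s + h)) => h3 /=;
    try lia; rewrite ?mulr1n ?mulr0n; ring.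
have L : \sum_(i < n) Gstar_p s eps i * (y i)%:R = aG s eps * k%:R + bG s eps n * h%:R.
  rewrite (eq_bigr _ (fun i _ => ey i)) big_split /= -!mulr_sumr sumrB !count_lt.
  rewrite (minn_idPr (_ : k <= n)%N); last lia.
  rewrite (minn_idPr (_ : s + h <= n)%N); last lia.
  rewrite (minn_idPr (_ : s <= n)%N); last lia.
  by rewrite natrD addrAC subrr add0r.
have L2 : aG s eps * k%:R + bG s eps n * h%:R = 1 / 2.
  have hs' : s%:R = k%:R + k%:R :> R by rewrite {1}hk natrD.
  have hh' : n%:R - s%:R = h%:R + h%:R :> R by rewrite -natrB ?(ltnW sn) // hh natrD.
  have := total1 sn; rewrite total ?(ltnW sn) // hh' hs' => e. lra.
apply/forallP => H; have := H y.
rewrite makespan_xstar // makespanE total1 // L L2 => h0.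
have := F3; move: h0. have -> : (1 - 1 / 2 : R) = 1 / 2 by field. rewrite maxxx; lra.
Qed.

End Consts.

End Inst.


Lemma final_ineq (R : realType) (m l T U : R) :
  4 <= T -> T ^+ 4 <= U -> 0 <= l -> 2 * T * m <= U ^+ 2 -> U ^+ 2 < 2 * T * (m + 1) ->
  l * U ^+ 2 <= T -> U <= m * T^-1 * (1 - m * l).
Proof.
move=> T4 UT l0 h1 h2 h3.
have T0 : 0 < T by lra.
have U0 : 0 < U.
  have : 0 < T ^+ 4 by apply: exprn_gt0.
  lra.
have ml : 2 * T * (m * l) <= T.
  have : 2 * T * m * l <= U ^+ 2 * l by apply: ler_wpM2r.
  nra.
have ml2 : m * l <= 1 / 2.
  have : T * (2 * (m * l) - 1) <= 0 by nra.
  rewrite pmulr_rle0 //; lra.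
have T2 : 16 * T ^+ 2 <= T ^+ 4.
  have -> : T ^+ 4 = T ^+ 2 * T ^+ 2 by rewrite -exprD.
  apply: ler_wpM2r; first exact: sqr_ge0.
  by rewrite expr2; nra.
have key : 2 * T * U <= m.
  have e1 : U ^+ 2 = U * U by rewrite expr2.
  have e2 : T ^+ 2 = T * T by rewrite expr2.
  have : 16 * T ^+ 2 * U <= U * U.
    rewrite -e1; apply: le_trans (_ : T ^+ 4 * U <= _).
      by apply: ler_wpM2r => //; apply: ltW.
    rewrite e1; apply: ler_wpM2r => //; exact: ltW.
  rewrite e2 => hU.
  have : T * (2 * T * U) < T * (m + 1) - T * (1 - 2 * T * U) - T * 2 * T * U.
    nra.
  have : 1 <= 2 * T * U by nra.
  move=> h4 h5.
  have : T * (2 * T * U) <= T * m by nra.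
  by rewrite ler_pM2l.
have Ti : T * T^-1 = 1 by rewrite mulfV // gt_eqF.
have Ti0 : 0 < T^-1 by rewrite invr_gt0.
have : m * T^-1 * (1 / 2) <= m * T^-1 * (1 - m * l).
  apply: ler_wpM2l; last lra.
  apply: mulr_ge0; last exact: ltW. nra.
suff : U <= m * T^-1 * (1 / 2) by lra.
have : 2 * T * U * T^-1 <= m * T^-1 by apply: ler_wpM2r => //; apply: ltW.
have -> : 2 * T * U * T^-1 = 2 * U * (T * T^-1) by ring.
rewrite Ti; lra.
Qed.

Unset Implicit Arguments.

Theorem theorem2 (R : realType) (s : nat) (eps : R) :
  (2 <= s)%N -> ~~ odd s ->
  0 < eps -> eps < 1 / (2 * s%:R - 1) ->
  exists c : R, 0 < c /\
  exists N : nat, forall n : nat, (N <= n)%N -> ~~ odd n ->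
    ((n%:R `^ (c * n%:R))%:E <= expected_evals (Gstar_p s eps (n:=n)))%E.
Proof.
move=> hs es he0 he1.
set d := gammaG s eps / betaG s eps.
have hb := F4 hs he0; have hg := F5 hs he0.
have d0 : 0 < d by apply: divr_gt0.
exists (d / 4); split; first by apply: divr_gt0.
exists (maxn (2 * s + 2) (Num.truncn ((16:R) `^ (4 / d))).+1) => n.
rewrite geq_max => /andP[hn1 hn2] en.
have sn : (s < n)%N by lia.
have n2 : (2 <= n)%N by lia.
set p := Gstar_p s eps (n:=n).
set x := xstar s n.
have nR1 : (1:R) <= n%:R by rewrite ler1n; lia.
set u := n%:R `^ (d / 4).
have u16 : 16 <= u.
  have e16 : (16:R) = ((16:R) `^ (4 / d)) `^ (d / 4).
    rewrite -powRrM; have -> : 4 / d * (d / 4) = 1 :> R.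
      by field; rewrite gt_eqF.
    by rewrite powRr1.
  rewrite e16 /u; apply: ge0_ler_powR; rewrite ?nnegrE ?powR_ge0 //.
    by apply: ltW; apply: divr_gt0.
  apply: ltW; apply: lt_le_trans (truncnS_gt _) _.
  by rewrite ler_nat.
set U := u ^+ n.
set N0 := U ^+ 2.
have hN0 : forall z, z != x -> makespan p z <= makespan p x -> N0 <= n%:R ^+ hamming x z.
  move=> z zx hz.
  have := trap hs he0 he1 sn zx hz => ht.
  have hh : d / 4 * (n * 2)%:R <= (hamming x z)%:R.
    have : d * (n%:R - s%:R) <= (hamming x z)%:R.
      rewrite /d mulrAC ler_pdivrMr // [X in _ <= X]mulrC; exact: ht.
    have : n%:R <= 2 * (n%:R - s%:R) :> R.
      have : (2 * s%:R + 2 <= n%:R :> R) by rewrite -(natrM R 2 s) -natrD ler_nat; lia.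
      lra.
    move=> h1 h2; rewrite natrM.
    have : d * n%:R <= d * (2 * (n%:R - s%:R)) by apply: ler_wpM2l => //; apply: ltW.
    lra.
  rewrite /N0 /U -exprM -powR_mulrn ?powR_ge0 // /u -powRrM.
  rewrite -powR_mulrn; last by apply: le_trans nR1.
  exact: ler_powR.
have N0p : 0 < N0 by rewrite /N0 exprn_gt0 // /U exprn_gt0 //; lra.
have hl := leave_ub (p := p) (x := x) (ltnW n2) hN0.
have hopt := not_opt hs he0 he1 sn es en.
set T : R := 2%:R ^+ n.
have T0 : 0 < T by rewrite exprn_gt0.
set M := Num.truncn (N0 / (2 * T)).
have := expected_lb M hopt.
apply: le_trans; rewrite lee_fin.
have -> : n%:R `^ (d / 4 * n%:R) = U.
  by rewrite powRrM -/u powR_mulrn // ; lra.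
apply: final_ineq.
- rewrite /T; have -> : (4 : R) = 2%:R ^+ 2 by rewrite expr2 -natrM.
  by rewrite ler_eXn2l // ?ltr1n.
- rewrite /U /T -exprM mulnC exprM; apply: lerXn2r; rewrite ?nnegrE ?exprn_ge0 //; try lra.
- exact: leave_ge0.
- have hM : M%:R <= N0 / (2 * T).
    by rewrite truncn_le divr_ge0 // ltW // mulr_gt0.
  move: hM; rewrite ler_pdivlMr ?mulr_gt0 // => hM.
  by rewrite [X in X <= _]mulrC.
- have := truncnS_gt (N0 / (2 * T)); rewrite -/M ltr_pdivrMr ?mulr_gt0 // => h.
  by move: h; rewrite -natr1 -/T [X in _ < X -> _]mulrC.
- have := hl; rewrite -/N0 -/T -/p -/x //.
Qed.
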